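(* Let $\{e_k:k\in\mathbb N\}$ be an orthonormal basis of $X$, and for every $k\in\mathbb N$ let $\mu_k$ be a real valued Borel measure on $X$ such that, setting $M_n(B):=\sum_{k=1}^n\mu_k(B)e_k$ for $n\in\mathbb N$ and Borel $B\subset X$, we have $\sup_{n\in\mathbb N}|M_n|(X)=:C<+\infty$. Then there exists $M\in\mathcal M(X,X)$ with $|M|(X)\le C$ and $\langle M(B),e_k\rangle=\mu_k(B)$ for all $k\in\mathbb N$ and Borel $B$; in particular $M(B)=\sum_{k=1}^\infty\mu_k(B)e_k$ for every Borel set $B$.
   Context: $X$ is a separable real Hilbert space. $\mathcal M(X,X)$ is the space of countably additive $X$-valued Borel measures $m$ on $X$ with finite total variation, where for an $X$-valued Borel measure $m$, $|m|(B):=\sup\sum_n\|m(B_n)\|$, the supremum over all at most countable partitions of $B$ into pairwise disjoint Borel sets. *)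

(* Defs.v *)
From HB Require Import structures.
From mathcomp Require Import all_boot all_order all_algebra.
From mathcomp Require Import all_classical all_reals all_analysis.
Set Implicit Arguments. Unset Strict Implicit. Unset Printing Implicit Defensive.
Import Order.TTheory GRing.Theory Num.Theory.
Import numFieldNormedType.Exports.
Local Open Scope classical_set_scope.
Local Open Scope ring_scope.

(* A real Hilbert space: a complete real normed space whose norm comes from
   an inner product [ip] (symmetric, bilinear, <x,x> = ||x||^2). *)
Definition is_inner_product (R : realType) (X : completeNormedModType R)
  (ip : X -> X -> R) : Prop :=
  [/\ (forall x y, ip x y = ip y x),
      (forall a x y z, ip (a *: x + y) z = a * ip x z + ip y z) &
      (forall x, ip x x = `|x| ^+ 2)].

Definition orthonormal_basis (R : realType) (X : completeNormedModType R)
  (ip : X -> X -> R) (e : nat -> X) : Prop :=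
  (forall i j, ip (e i) (e j) = (i == j)%:R) /\
  closure [set x | exists n (c : nat -> R), x = \sum_(k < n) c k *: e k]
    = [set: X].

Definition Borel (T : topologicalType) : set (set T) := <<s [set U | open U] >>.

(* countable Borel partitions of B (finite partitions = padding with set0) *)
Definition borel_partition (T : topologicalType) (B : set T) (F : nat -> set T)
  : Prop :=
  [/\ (forall n, Borel (F n)), trivIset setT F & \bigcup_n F n = B].

Definition real_measure (R : realType) (T : topologicalType) (mu : set T -> R)
  : Prop :=
  mu set0 = 0 /\
  forall F : nat -> set T, (forall n, Borel (F n)) -> trivIset setT F ->
    (fun n => \sum_(k < n) mu (F k)) @ \oo --> mu (\bigcup_k F k).

Definition vector_measure (R : realType) (T : topologicalType)
  (V : normedModType R) (m : set T -> V) : Prop :=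
  m set0 = 0 /\
  forall F : nat -> set T, (forall n, Borel (F n)) -> trivIset setT F ->
    (fun n => \sum_(k < n) m (F k)) @ \oo --> m (\bigcup_k F k).

Definition vtotal_variation (R : realType) (T : topologicalType)
  (V : normedModType R) (m : set T -> V) (B : set T) : \bar R :=
  ereal_sup [set x | exists F, borel_partition B F /\
                     x = (\sum_(0 <= n <oo) (`|m (F n)|)%:E)%E].

Definition partial_vmeasure (R : realType) (T : topologicalType)
  (V : normedModType R) (mu : nat -> set T -> R) (e : nat -> V) (n : nat)
  : set T -> V :=
  fun B => \sum_(k < n) mu k B *: e k.

(* Main.v *)
Set Warnings "-all".
Set Implicit Arguments. Unset Strict Implicit.
Require Import Defs.
From HB Require Import structures.
From mathcomp Require Import all_boot all_order all_algebra.
From mathcomp Require Import all_classical all_reals all_analysis.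
From mathcomp Require Import ring lra zify.
Import Order.TTheory GRing.Theory Num.Theory.
Import numFieldNormedType.Exports.
Local Open Scope classical_set_scope.
Local Open Scope ring_scope.
Section IP.
Variables (R : realType) (X : completeNormedModType R) (ip : X -> X -> R).
Hypothesis Hip : is_inner_product ip.

Lemma ipC x y : ip x y = ip y x. Proof. by case: Hip. Qed.
Lemma ipL a x y z : ip (a *: x + y) z = a * ip x z + ip y z.
Proof. by case: Hip. Qed.
Lemma ipN2 x : ip x x = `|x| ^+ 2. Proof. by case: Hip. Qed.
Lemma ip0l z : ip 0 z = 0.
Proof.
have := ipL 1 0 0 z; rewrite scaler0 addr0 mul1r => h; lra.
Qed.
Lemma ipDl x y z : ip (x + y) z = ip x z + ip y z.
Proof. by have := ipL 1 x y z; rewrite scale1r mul1r. Qed.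
Lemma ipZl a x z : ip (a *: x) z = a * ip x z.
Proof. by rewrite -(addr0 (a *: x)) ipL ip0l addr0. Qed.
Lemma ipNl x z : ip (- x) z = - ip x z.
Proof. by rewrite -scaleN1r ipZl mulN1r. Qed.
Lemma ipBl x y z : ip (x - y) z = ip x z - ip y z.
Proof. by rewrite ipDl ipNl. Qed.
Lemma ipDr x y z : ip z (x + y) = ip z x + ip z y.
Proof. by rewrite ipC ipDl !(ipC z). Qed.
Lemma ipZr a x z : ip z (a *: x) = a * ip z x.
Proof. by rewrite ipC ipZl ipC. Qed.
Lemma ip0r z : ip z 0 = 0.
Proof. by rewrite ipC ip0l. Qed.
Lemma ipBr x y z : ip z (x - y) = ip z x - ip z y.
Proof. by rewrite !(ipC z) ipBl. Qed.
Lemma ip_suml n (f : 'I_n -> X) z :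
  ip (\sum_(k < n) f k) z = \sum_(k < n) ip (f k) z.
Proof. exact: (big_morph (ip^~ z) (fun x y => ipDl x y z) (ip0l z)). Qed.
Lemma ip_sumr n (f : 'I_n -> X) z :
  ip z (\sum_(k < n) f k) = \sum_(k < n) ip z (f k).
Proof. by rewrite ipC ip_suml; apply: eq_bigr => i _; rewrite ipC. Qed.

Lemma ip_CS x y : `|ip x y| <= `|x| * `|y|.
Proof.
have key : ip x y ^+ 2 <= `|x| ^+ 2 * `|y| ^+ 2.
  have [->|y0] := eqVneq y 0.
    by rewrite ip0r normr0 expr2 !mul0r mulr0.
  have ny : 0 < `|y| ^+ 2 by rewrite exprn_gt0 // normr_gt0.
  pose t := ip x y / `|y| ^+ 2.
  have h := ipN2 (x - t *: y).
  have h0 : 0 <= ip (x - t *: y) (x - t *: y) by rewrite h exprn_ge0.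
  rewrite ipBl !ipBr !ipZl !ipZr !ipN2 (ipC y x) in h0.
  have e : t * `|y| ^+ 2 = ip x y by rewrite /t divfK // gt_eqF.
  clearbody t; rewrite -e in h0.
  have h1 : 0 <= `|x| ^+ 2 - t * ip x y by rewrite -e; lra.
  have h2 := mulr_ge0 h1 (ltW ny).
  rewrite -e; rewrite -e in h2.
  have -> : (t * `|y| ^+ 2) ^+ 2 = `|x| ^+ 2 * `|y| ^+ 2 - (`|x| ^+ 2 - t * (t * `|y| ^+ 2)) * `|y| ^+ 2 by ring.
  by rewrite lerBlDr lerDl.
rewrite -(@ler_pXn2r _ 2) ?nnegrE ?mulr_ge0 ?normr_ge0 //.
by rewrite real_normK ?num_real // exprMn.
Qed.

Lemma ip_cont v : continuous (ip v).
Proof.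
move=> y; apply/cvgrPdist_le => eps eps0.
have Hd : 0 < eps / (`|v| + 1) by rewrite divr_gt0 // ltr_pwDr // normr_ge0.
have := @cvg_id _ (nbhs y); move/cvgrPdist_le => /(_ _ Hd).
apply: filterS => z Hz.
rewrite -ipBr; apply: (le_trans (ip_CS _ _)).
apply: (le_trans (ler_wpM2l (normr_ge0 _) Hz)).
have v0 := normr_ge0 v.
rewrite mulrA ler_pdivrMr; last by lra.
nra.
Qed.

Lemma ip_contl v : continuous (ip^~ v).
Proof. move=> y; rewrite (_ : ip^~ v = ip v); first exact: ip_cont.
by apply/funext => z; rewrite ipC. Qed.

End IP.
Arguments ip_cont {R X ip} Hip v.
Arguments ip_contl {R X ip} Hip v.
Section ON.
Variables (R : realType) (X : completeNormedModType R) (ip : X -> X -> R)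
  (e : nat -> X).
Hypothesis Hip : is_inner_product ip.
Hypothesis Hon : orthonormal_basis ip e.

Lemma ip_sum_e n (c : nat -> R) j :
  ip (\sum_(k < n) c k *: e k) (e j) = if (j < n)%N then c j else 0.
Proof.
rewrite (ip_suml Hip); under eq_bigr do rewrite (ipZl Hip) (proj1 Hon).
elim: n => [|n IH]; first by rewrite big_ord0.
rewrite big_ord_recr /= IH.
have [jn|jn|->] := ltngtP j n; rewrite ?mulr0 ?addr0 ?mulr1.
- by rewrite ifT //; lia.
- by rewrite ifF //; lia.
- by rewrite add0r ltnSn.
Qed.

Lemma norm_sum_e n (c : nat -> R) :
  `|\sum_(k < n) c k *: e k| ^+ 2 = \sum_(k < n) c k ^+ 2.
Proof.
rewrite -(ipN2 Hip) (ip_sumr Hip); apply: eq_bigr => k _.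
by rewrite (ipZr Hip) ip_sum_e ltn_ord expr2.
Qed.

Lemma sum_e_cvg (c : nat -> R) K : (forall n, \sum_(k < n) c k ^+ 2 <= K) ->
  cvgn (fun n => \sum_(k < n) c k *: e k).
Proof.
move=> HK.
have E : (fun n => \sum_(k < n) c k *: e k) = series (fun k => c k *: e k).
  by apply/funext => n; rewrite /series /= big_mkord.
rewrite E; apply/cauchy_cvgP/cauchy_seriesP => eps eps0.
have cv : cvgn (series (fun k => c k ^+ 2)).
  apply: nondecreasing_is_cvgn.
    by apply: nondecreasing_series => k _; rewrite sqr_ge0.
  by exists K => _ [n _ <-]; rewrite /series /= big_mkord.
move: cv => /cauchy_cvgP/cauchy_seriesP /(_ (eps ^+ 2) (exprn_gt0 _ eps0)).
apply: filterS => -[m n] /= H.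
have E1 : \sum_(m <= k < n) c k *: e k =
    \sum_(k < n) (if (m <= k)%N then c k else 0) *: e k.
  rewrite big_geq_mkord big_mkcond; apply: eq_bigr => k _.
  by case: (m <= k)%N => /=; rewrite ?scale0r.
have E2 : \sum_(m <= k < n) c k ^+ 2 =
    \sum_(k < n) (if (m <= k)%N then c k else 0) ^+ 2.
  rewrite big_geq_mkord big_mkcond; apply: eq_bigr => k _.
  by case: (m <= k)%N => //=; rewrite expr2 mul0r.
rewrite E1 -(@ltr_pXn2r _ 2) ?nnegrE ?normr_ge0 ?ltW //.
rewrite (norm_sum_e n (fun k : nat => if (m <= k)%N then c k else 0)) -E2; apply: le_lt_trans H; exact: ler_norm.
Qed.

Lemma ortho_zero v : (forall k, ip v (e k) = 0) -> v = 0.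
Proof.
move=> H.
have cl : closed [set y | ip v y = 0].
  apply: (@preimage_closed _ _ (ip v) [set x : R | x = 0]).
    by move=> y _; exact: (ip_cont Hip v y).
  exact: closed_eq.
have sub : [set x | exists n (c : nat -> R), x = \sum_(k < n) c k *: e k]
    `<=` [set y | ip v y = 0].
  move=> x [n [c ->]] /=; rewrite (ip_sumr Hip); apply: big1 => k _.
  by rewrite (ipZr Hip) H mulr0.
have := closureS sub; rewrite (proj2 Hon); move: cl => /closure_id <-.
move=> /(_ v I) /=; rewrite (ipN2 Hip) => /eqP.
by rewrite sqrf_eq0 normr_eq0 => /eqP.
Qed.

End ON.
Lemma cvg_sumJ (T : realType) J (f : nat -> nat -> T) (a : nat -> T) :
  (forall j, f j @ \oo --> a j) ->
  (fun n => \sum_(j < J) f j n) @ \oo --> \sum_(j < J) a j.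
Proof.
move=> H; elim: J => [|J IH].
  under eq_cvg do rewrite big_ord0.
  by rewrite big_ord0; exact: cvg_cst.
under eq_cvg do rewrite big_ord_recr.
by rewrite big_ord_recr; apply: cvgD => //; exact: H.
Qed.

Section MEAS.
Variables (R : realType) (X : completeNormedModType R)
  (ip : X -> X -> R) (e : nat -> X) (mu : nat -> set X -> R) (C : R).
Hypothesis Hip : is_inner_product ip.
Hypothesis Hon : orthonormal_basis ip e.
Hypothesis Hmu : forall k, real_measure (mu k).
Hypothesis HC : ereal_sup [set vtotal_variation (partial_vmeasure mu e n) [set: X] | n in [set: nat]]
    = C%:E.

Lemma Borel0 : Borel (@set0 X).
Proof. exact: sigma_algebra0. Qed.
Lemma BorelC (A : set X) : Borel A -> Borel (~` A).
Proof. by move=> HA; rewrite -setTD; exact: sigma_algebraCD. Qed.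
Lemma BorelU (F : nat -> set X) : (forall n, Borel (F n)) -> Borel (\bigcup_n F n).
Proof. exact: sigma_algebra_bigcup. Qed.

Lemma part_bound n F : borel_partition [set: X] F -> forall J,
  \sum_(j < J) `|partial_vmeasure mu e n (F j)| <= C.
Proof.
move=> HF J.
have h1 : (vtotal_variation (partial_vmeasure mu e n) [set: X] <= C%:E)%E.
  by rewrite -HC; apply: ereal_sup_ubound; exists n.
have h2 : (\sum_(0 <= j <oo) (`|partial_vmeasure mu e n (F j)|)%:E <=
    vtotal_variation (partial_vmeasure mu e n) [set: X])%E.
  by apply: ereal_sup_ubound; exists F.
have h3 : (\sum_(0 <= j < J) (`|partial_vmeasure mu e n (F j)|)%:E <=
    \sum_(0 <= j <oo) (`|partial_vmeasure mu e n (F j)|)%:E)%E.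
  by apply: nneseries_lim_ge => *; rewrite lee_fin normr_ge0.
have := le_trans h3 (le_trans h2 h1).
by rewrite sumEFin lee_fin big_mkord.
Qed.

Lemma disj_bound (F : nat -> set X) : (forall j, Borel (F j)) ->
  trivIset setT F -> forall n J,
  \sum_(j < J) `|partial_vmeasure mu e n (F j)| <= C.
Proof.
move=> HB HT n J.
pose G := fun j => if j is j'.+1 then F j' else ~` \bigcup_j F j.
have HG : borel_partition [set: X] G.
  split.
  - by case => [|j] /=; [apply: BorelC; apply: BorelU|].
  - move=> [|i] [|j] _ _ [x [/= Gi Gj]] //.
    + by exfalso; apply: Gi; exists j.
    + by exfalso; apply: Gj; exists i.
    + by congr S; apply: HT => //; exists x.
  - apply/seteqP; split => // x _.
    case: (pselect ((\bigcup_j F j) x)) => [[j _ Fj]|nF].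
      by exists j.+1.
    by exists 0%N.
have := part_bound n HG J.+1.
rewrite -(big_mkord xpredT (fun j => `|partial_vmeasure mu e n (G j)|)).
rewrite big_nat_recl //= big_mkord.
have := normr_ge0 (partial_vmeasure mu e n (~` \bigcup_j F j)).
move=> h1 h2; lra.
Qed.

Lemma pv_bound B : Borel B -> forall n, `|partial_vmeasure mu e n B| <= C.
Proof.
move=> HB n.
pose F := fun j : nat => if j is 0 then B else set0.
have := @disj_bound F _ _ n 1.
rewrite big_ord1 /=; apply.
- by case => [|j] //=; exact: Borel0.
- by move=> [|i] [|j] _ _ [x [/= Fi Fj]].
Qed.

Lemma pv_sq_bound B : Borel B -> forall n, \sum_(k < n) mu k B ^+ 2 <= C ^+ 2.
Proof.
move=> HB n; rewrite -(norm_sum_e Hip Hon n (fun k => mu k B)).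
have h := pv_bound HB n; have h0 := normr_ge0 (partial_vmeasure mu e n B).
rewrite /partial_vmeasure in h h0; nra.
Qed.

Definition Mlim (B : set X) : X := lim ((fun n => \sum_(k < n) mu k B *: e k) @ \oo).

Lemma M_cvg B : Borel B -> (fun n => \sum_(k < n) mu k B *: e k) @ \oo --> Mlim B.
Proof. by move=> HB; exact: (@sum_e_cvg _ _ _ _ Hip Hon (fun k => mu k B) _ (pv_sq_bound HB)). Qed.

Lemma M_ip k B : Borel B -> ip (Mlim B) (e k) = mu k B.
Proof.
move=> HB.
have h1 : (fun n => ip (\sum_(k < n) mu k B *: e k) (e k)) @ \oo --> ip (Mlim B) (e k).
  exact: (continuous_cvg _ (ip_contl Hip (e k) (Mlim B)) (M_cvg HB)).
have h2 : (fun n => ip (\sum_(k < n) mu k B *: e k) (e k)) @ \oo --> mu k B.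
  apply: cvg_near_cst; apply: filterS (nbhs_infty_gt k) => n kn.
  by rewrite (ip_sum_e Hip Hon n (fun k => mu k B)) kn.
exact: (cvg_unique _ h1 h2).
Qed.


Lemma M_fatou (F : nat -> set X) : (forall j, Borel (F j)) ->
  trivIset setT F -> forall J, \sum_(j < J) `|Mlim (F j)| <= C.
Proof.
move=> HB HT J.
have h : (fun n => \sum_(j < J) `|partial_vmeasure mu e n (F j)|) @ \oo -->
    \sum_(j < J) `|Mlim (F j)|.
  apply: (cvg_sumJ (f := fun j n => `|partial_vmeasure mu e n (F j)|) (a := fun j => `|Mlim (F j)|)) => j.
  exact: (cvg_norm (M_cvg (HB j))).
apply: (cvgr_to_le h).
by apply: nearW => n; exact: disj_bound.
Qed.

Lemma M_tv : (vtotal_variation Mlim [set: X] <= C%:E)%E.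
Proof.
apply: ge_ereal_sup => _ [F [[HB HT _] ->]].
apply: lime_le.
  by apply: is_cvg_nneseries => n _ _; rewrite lee_fin normr_ge0.
apply: nearW => J; rewrite sumEFin lee_fin big_mkord.
exact: M_fatou.
Qed.

Lemma M_add (F : nat -> set X) : (forall j, Borel (F j)) ->
  trivIset setT F ->
  (fun n => \sum_(k < n) Mlim (F k)) @ \oo --> Mlim (\bigcup_k F k).
Proof.
move=> HB HT.
pose u := fun j => Mlim (F j).
have cn : cvgn [normed series u].
  apply: nondecreasing_is_cvgn.
    by apply: nondecreasing_series => k _ _; rewrite normr_ge0.
  exists C => _ [n _ <-]; rewrite /series /= /series /= big_mkord; exact: M_fatou.
have cs := normed_cvg cn.
have E : (fun n => \sum_(k < n) Mlim (F k)) = series u.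
  by apply/funext => n; rewrite /series /= big_mkord.
rewrite E.
suff -> : Mlim (\bigcup_k F k) = lim (series u @ \oo) by [].
apply/eqP; rewrite -subr_eq0; apply/eqP; apply: (ortho_zero Hip Hon) => k.
rewrite (ipBl Hip) M_ip; last exact: BorelU.
have h1 : (fun n => ip (series u n) (e k)) @ \oo --> ip (lim (series u @ \oo)) (e k).
  exact: (continuous_cvg _ (ip_contl Hip (e k) _) cs).
have E2 : (fun n => ip (series u n) (e k)) = (fun n => \sum_(j < n) mu k (F j)).
  apply/funext => n; rewrite /series /= big_mkord (ip_suml Hip).
  by apply: eq_bigr => j _; rewrite /u M_ip.
have h2 : (fun n => ip (series u n) (e k)) @ \oo --> mu k (\bigcup_k F k).
  by rewrite E2; exact: (proj2 (Hmu k) F HB HT).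
by rewrite (cvg_unique _ h1 h2) ?subrr.
Qed.

Lemma M0 : Mlim set0 = 0.
Proof.
rewrite /Mlim.
have -> : (fun n => \sum_(k < n) mu k set0 *: e k) = (fun=> 0).
  apply/funext => n; apply: big1 => k _.
  by rewrite (proj1 (Hmu k)) scale0r.
exact: lim_cst.
Qed.

End MEAS.

Unset Implicit Arguments.

Theorem lemma2p8 (R : realType) (X : completeNormedModType R)
  (ip : X -> X -> R) (e : nat -> X) (mu : nat -> set X -> R) (C : R) :
  is_inner_product ip ->
  orthonormal_basis ip e ->
  (forall k, real_measure (mu k)) ->
  ereal_sup [set vtotal_variation (partial_vmeasure mu e n) [set: X] | n in [set: nat]]
    = C%:E ->
  exists M : set X -> X,
    [/\ vector_measure M,
        (vtotal_variation M [set: X] <= C%:E)%E,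
        (forall k B, Borel B -> ip (M B) (e k) = mu k B) &
        (forall B, Borel B ->
           (fun n => \sum_(k < n) mu k B *: e k) @ \oo --> M B)].
Proof.
move=> Hip Hon Hmu HC.
exists (Mlim e mu); split.
- split; first exact: M0.
  by move=> F HB HT; exact: (M_add Hip Hon Hmu HC HB HT).
- exact: (M_tv Hip Hon HC).
- by move=> k B HB; exact: (M_ip Hip Hon HC k HB).
- by move=> B HB; exact: (M_cvg Hip Hon HC HB).
Qed.
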